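(* Let $C_1,C_2$ be Archimedean $d$-copulas with strict generators $\phi_1,\phi_2$, respectively. If the function $f=\phi_1\circ\phi_2^{-1}:[0,\infty)\to[0,\infty)$ is subadditive near $\infty$, then $C_1\le_{loc}C_2$.
   Context: A generator is a continuous, strictly decreasing function $\phi:[0,1]\to[0,\infty]$ with $\phi(1)=0$; it is strict if $\lim_{s\searrow0}\phi(s)=\infty$, in which case $\phi$ is a bijection $(0,1]\to[0,\infty)$ with inverse $\phi^{-1}$. A $d$-copula $C$ is Archimedean with strict generator $\phi$ if $C(\boldsymbol u)=\phi^{-1}(\sum_{k=1}^d\phi(u_k))$ (with $C(\boldsymbol u)=0$ if some $u_k=0$). A function $f:[0,\infty)\to[0,\infty)$ is subadditive near $\infty$ if there is $M\ge0$ with $f(x+y)\le f(x)+f(y)$ for all $x,y\in[M,\infty)$. $C_1\le_{loc}C_2$ means there is $\varepsilon>0$ with $C_1(\boldsymbol u)\le C_2(\boldsymbol u)$ for all $\boldsymbol u\in B_\varepsilon(\boldsymbol 0)\cap[0,1]^d$ (Euclidean ball). *)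

(* Defs.v *)
From HB Require Import structures.
From mathcomp Require Import all_boot all_order all_algebra.
From mathcomp Require Import all_classical all_reals all_analysis.
Set Implicit Arguments. Unset Strict Implicit. Unset Printing Implicit Defensive.
Import Order.TTheory GRing.Theory Num.Theory.
Import numFieldNormedType.Exports.
Local Open Scope classical_set_scope.
Local Open Scope ring_scope.

Section Defs.
Variable R : realType.

Definition in_unit_cube (d : nat) (u : 'I_d -> R) : Prop :=
  forall k, 0 <= u k <= 1.

(* A d-copula: a function on [0,1]^d (values outside are irrelevant) which
   is grounded, has uniform one-dimensional margins, and is d-increasing
   (every d-box [a,b] has nonnegative C-volume). *)
Definition copula (d : nat) (C : ('I_d -> R) -> R) : Prop :=
  [/\ (forall u, in_unit_cube u -> (exists k, u k = 0) -> C u = 0),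
      (forall u k, in_unit_cube u -> (forall j, j != k -> u j = 1) -> C u = u k) &
      (forall a b, in_unit_cube a -> in_unit_cube b -> (forall k, a k <= b k) ->
        0 <= \sum_(e : {ffun 'I_d -> bool})
               (-1) ^+ #|[set k | ~~ e k]| * C (fun k => if e k then b k else a k))].

(* A strict generator phi : [0,1] -> [0,oo].  Since phi is strict, its
   (infinite) value at 0 is determined by continuity; we represent phi by an
   R-valued function and only use its values on (0,1]. *)
Definition strict_generator (phi : R -> R) : Prop :=
  [/\ {within [set x : R | 0 < x <= 1], continuous phi},
      (forall x y, 0 < x -> x < y -> y <= 1 -> phi y < phi x),
      phi 1 = 0 &
      phi x @[x --> 0^'+] --> +oo].

Definition gen_inv (phi : R -> R) (t : R) : R :=
  xget 1 [set v : R | 0 < v <= 1 /\ phi v = t].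

Definition archimedean (d : nat) (C : ('I_d -> R) -> R) (phi : R -> R) : Prop :=
  forall u, in_unit_cube u ->
    C u = if `[< exists k, u k = 0 >] then 0
          else gen_inv phi (\sum_(k < d) phi (u k)).

Definition subadditive_near_infty (f : R -> R) : Prop :=
  exists M : R, 0 <= M /\
    forall x y, M <= x -> M <= y -> f (x + y) <= f x + f y.

Definition copula_le_loc (d : nat) (C1 C2 : ('I_d -> R) -> R) : Prop :=
  exists eps : R, 0 < eps /\
    forall u, in_unit_cube u -> Num.sqrt (\sum_(k < d) u k ^+ 2) < eps ->
      C1 u <= C2 u.

End Defs.

(* Main.v *)
Require Import Defs.
From HB Require Import structures.
From mathcomp Require Import all_boot all_order all_algebra.
From mathcomp Require Import all_classical all_reals all_analysis.
Import Order.TTheory GRing.Theory Num.Theory.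
Import numFieldNormedType.Exports.
Local Open Scope classical_set_scope.
Local Open Scope ring_scope.

Lemma near0 (R:realType) (phi:R->R) : phi x @[x --> 0^'+] --> +oo ->
  forall A, exists2 e : R, 0<e & forall x, 0<x -> x<e -> A <= phi x.
Proof.
move=> /cvgryPge H A; have := H A.
case/nbhs_ballP => e e0 He; exists e => // x x0 xe.
apply: He => //.
rewrite /ball /= sub0r normrN gtr0_norm //.
Qed.

Lemma gen_surj (R:realType) (phi:R->R) : strict_generator phi ->
  forall t, 0 <= t -> exists v, 0 < v <= 1 /\ phi v = t.
Proof.
case=> cphi _ phi1 lim t t0.
have [e e0 He] := @near0 _ _ lim t.
set a := Num.min (e/2) 1.
have a0 : 0 < a by rewrite lt_min ltr01 andbT divr_gt0.
have a1 : a <= 1 by rewrite ge_min lexx orbT.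
have ae : a < e by rewrite gt_min ltr_pdivrMr // ltr_pMr // ltr1n.
have hta := He a a0 ae.
have [c cin hc] : exists2 c, c \in `[a, 1] & phi c = t.
  apply: IVT => //.
    apply: continuous_subspaceW cphi => x /=; rewrite in_itv /= => /andP[ax ->].
    by rewrite andbT (lt_le_trans a0 ax).
  by rewrite phi1 ge_min t0 orbT le_max hta.
exists c; split => //; move: cin; rewrite in_itv /= => /andP[ac ->].
by rewrite (lt_le_trans a0 ac).
Qed.

Lemma subadd_sum (R:realType) (f : R -> R) (M : R) : 0 <= M ->
  (forall x y, M <= x -> M <= y -> f (x + y) <= f x + f y) ->
  forall n (g : 'I_n.+1 -> R), (forall i, M <= g i) ->
  M <= \sum_i g i /\ f (\sum_i g i) <= \sum_i f (g i).
Proof.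
move=> M0 fs; elim=> [|n IH] g gM.
  by rewrite !big_ord1; split.
have [h1 h2] := IH (fun i => g (widen_ord (leqnSn _) i)) (fun i => gM _).
rewrite !(big_ord_recr n.+1) /=; split.
  by rewrite -[M]addr0 lerD // (le_trans M0).
by apply: (le_trans (fs _ _ h1 (gM _))); rewrite lerD2r.
Qed.

Lemma subadd_sum' (R:realType) (f : R -> R) (M : R) : 0 <= M ->
  (forall x y, M <= x -> M <= y -> f (x + y) <= f x + f y) ->
  forall n (g : 'I_n -> R), (0 < n)%N -> (forall i, M <= g i) ->
  f (\sum_i g i) <= \sum_i f (g i).
Proof.
move=> M0 fs [//|n] g _ gM; exact: (@subadd_sum _ f M M0 fs n g gM).2.
Qed.

Theorem mainTheorem12 (R : realType) (d : nat)
    (C1 C2 : ('I_d -> R) -> R) (phi1 phi2 : R -> R) :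
  (2 <= d)%N ->
  copula C1 -> copula C2 ->
  strict_generator phi1 -> strict_generator phi2 ->
  archimedean C1 phi1 -> archimedean C2 phi2 ->
  subadditive_near_infty (fun x => phi1 (gen_inv phi2 x)) ->
  copula_le_loc C1 C2.
Proof.
move=> d2 _ _ g1 g2 a1 a2 [M [M0 fs]].
have g2' := g2; case: g2' => _ dec2 _ lim2.
have g1' := g1; case: g1' => _ dec1 p11 _.
have [e e0 He] := @near0 _ _ lim2 M.
exists e; split => // u uc ub.
rewrite a1 // a2 //; case: ifP => // /negbT/asboolPn hz.
have upos k : 0 < u k.
  have /andP[u0 _] := uc k; rewrite lt_neqAle u0 andbT eq_sym.
  by apply/eqP => h; apply: hz; exists k.
have ule k : u k <= 1 by have /andP[] := uc k.
have ue k : u k < e.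
  apply: le_lt_trans ub.
  rewrite -(ger0_norm (ltW (upos k))) -sqrtr_sqr ler_sqrt; last first.
    by apply: sumr_ge0 => i _; rewrite sqr_ge0.
  by rewrite (bigD1 k) //= lerDl sumr_ge0 // => i _; rewrite sqr_ge0.
have ginv2 v : 0 < v <= 1 -> gen_inv phi2 (phi2 v) = v.
  move=> hv; apply: xget_subset1; first by split.
  move=> x y [/andP[x0 x1] hx] [/andP[y0 y1] hy].
  have hxy : phi2 x = phi2 y by rewrite hx hy.
  case: (ltgtP x y) => // h.
    by move: (dec2 _ _ x0 h y1); rewrite hxy ltxx.
  by move: (dec2 _ _ y0 h x1); rewrite hxy ltxx.
have phi1ge0 v : 0 < v <= 1 -> 0 <= phi1 v.
  case/andP=> v0; rewrite le_eqVlt => /orP[/eqP -> | v1]; first by rewrite p11.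
  by rewrite -p11 ltW // dec1.
set S1 := \sum_(k < d) phi1 (u k).
set S2 := \sum_(k < d) phi2 (u k).
have S10 : 0 <= S1 by apply: sumr_ge0 => k _; apply: phi1ge0; rewrite upos ule.
have [v1 [hv1 pv1]] : exists v, 0 < v <= 1 /\ phi1 v = S1.
  by apply: gen_surj.
have [/andP[w0 w1] pw] : (0 < gen_inv phi1 S1 <= 1) /\ phi1 (gen_inv phi1 S1) = S1.
  by apply: (xgetPex 1 (P := [set v : R | 0 < v <= 1 /\ phi1 v = S1])); exists v1.
have [y0 y1] : 0 < gen_inv phi2 S2 /\ gen_inv phi2 S2 <= 1.
  rewrite /gen_inv; case: xgetP => [y _ [/andP[-> ->]] //|_]; by rewrite ltr01 lexx.
have key : phi1 (gen_inv phi2 S2) <= S1.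
  apply: le_trans (@subadd_sum' _ _ M M0 fs _ _ _ _) _.
  - by apply: leq_trans d2.
  - move=> k; apply: He; [exact: upos | exact: ue].
  by apply: ler_sum => k _; rewrite ginv2 // upos ule.
case: (leP (gen_inv phi1 S1) (gen_inv phi2 S2)) => // hlt.
by move: (dec1 _ _ y0 hlt w1); rewrite pw ltNge key.
Qed.
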